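(* Let $t\ge1$, $i\ge0$ integers, let $h:\mathbb{F}_{2^t}\to\mathbb{F}_{2^t}$ be any function, and let $f:\mathbb{F}_{2^t}\times\mathbb{F}_{2^t}\to\mathbb{F}_2$ be $f(x,y)=Tr_1^t(xy^{2^i}+h(y))$. Then $f$ is negabent if and only if $y\mapsto Tr_1^t(h(y))$ is a bent function on $\mathbb{F}_{2^t}$.
   Context: $Tr_1^t$ is the absolute trace of $\mathbb{F}_{2^t}$. Fix a self-dual basis $\{\alpha_1,\dots,\alpha_t\}$ of $\mathbb{F}_{2^t}$ over $\mathbb{F}_2$ ($Tr_1^t(\alpha_i\alpha_j)=\delta_{ij}$) and identify $\mathbb{F}_{2^t}\times\mathbb{F}_{2^t}$ with $\mathbb{F}_2^{2t}$ via coordinates; let $wt(x,y)$ be the number of nonzero coordinates. $g:\mathbb{F}_{2^t}\times\mathbb{F}_{2^t}\to\mathbb{F}_2$ is negabent if $\left|\sum_{(x,y)}(-1)^{g(x,y)+Tr_1^t(ax)+Tr_1^t(by)}\,\mathrm{i}^{wt(x,y)}\right|=2^{t}$ for all $(a,b)$ ($\mathrm{i}=\sqrt{-1}$). A function $u:\mathbb{F}_{2^t}\to\mathbb{F}_2$ is bent if $\left|\sum_{y}(-1)^{u(y)+Tr_1^t(\mu y)}\right|=2^{t/2}$ for all $\mu\in\mathbb{F}_{2^t}$ (equivalently, $\sum_y(-1)^{u(y)+u(y+b)}=0$ for all $b\neq0$). *)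

(* Defs.v *)
From HB Require Import structures.
From mathcomp Require Import all_boot all_order all_algebra all_field.
Set Implicit Arguments. Unset Strict Implicit. Unset Printing Implicit Defensive.
Import Order.TTheory GRing.Theory Num.Theory.
Local Open Scope ring_scope.

(* F plays the role of F_{2^t} (a finite field with #|F| = 2^t).
   F_2 is represented by bool, with addition = xor (+). *)

(* Absolute trace Tr_1^t : F_{2^t} -> F_{2^t} (values lie in the prime field). *)
Definition Tr (F : finFieldType) (t : nat) (x : F) : F :=
  \sum_(k < t) x ^+ (2 ^ k).

Definition trb (F : finFieldType) (t : nat) (x : F) : bool := Tr t x != 0.

Definition self_dual (F : finFieldType) (t : nat) (alpha : 'I_t -> F) : Prop :=
  forall j k : 'I_t, Tr t (alpha j * alpha k) = (j == k)%:R.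

Definition coords (F : finFieldType) (t : nat) (alpha : 'I_t -> F) (x : F)
  : option {ffun 'I_t -> bool} :=
  [pick c : {ffun 'I_t -> bool} | x == \sum_(k < t) (c k)%:R * alpha k].

Definition wt1 (F : finFieldType) (t : nat) (alpha : 'I_t -> F) (x : F) : nat :=
  if coords alpha x is Some c then #|[set k | c k]| else 0.

Definition wt2 (F : finFieldType) (t : nat) (alpha : 'I_t -> F) (x y : F) : nat :=
  (wt1 alpha x + wt1 alpha y)%N.

Definition sgn (b : bool) : algC := (-1) ^+ b.

Definition negabent (F : finFieldType) (t : nat) (alpha : 'I_t -> F)
  (g : F -> F -> bool) : Prop :=
  forall a b : F,
    `| \sum_(x : F) \sum_(y : F)
         sgn (g x y (+) trb t (a * x) (+) trb t (b * y)) * 'i ^+ (wt2 alpha x y) |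
    = 2%:R ^+ t.

Definition bent (F : finFieldType) (t : nat) (u : F -> bool) : Prop :=
  forall mu : F,
    `| \sum_(y : F) sgn (u y (+) trb t (mu * y)) | = sqrtC (2%:R ^+ t).

(* Main.v *)
Require Import Defs.
From mathcomp Require Import all_boot all_order all_algebra all_field.
From mathcomp Require Import ring.
Set Implicit Arguments. Unset Strict Implicit. Unset Printing Implicit Defensive.
Import Order.TTheory GRing.Theory Num.Theory.
Local Open Scope ring_scope.

Section Main.
Variables (t : nat) (F : finFieldType).
Hypothesis HF : #|F| = (2 ^ t)%N.
Variable alpha : 'I_t -> F.
Hypothesis Halpha : self_dual alpha.

Lemma two0 : (2%:R : F) = 0.
Proof. exact: pcharf0 (card_finPcharP HF (isT : prime 2)). Qed.

Lemma addxx (x : F) : x + x = 0.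
Proof. by rewrite -mulr2n -mulr_natl two0 mul0r. Qed.

Lemma sqrD (x y : F) : (x + y) ^+ 2 = x ^+ 2 + y ^+ 2.
Proof. by rewrite sqrrD mulr2n addxx addr0. Qed.

Lemma frobD k (x y : F) : (x + y) ^+ (2 ^ k) = x ^+ (2 ^ k) + y ^+ (2 ^ k).
Proof.
elim: k => [|k IH]; first by rewrite expn0 !expr1.
by rewrite expnSr !exprM IH sqrD.
Qed.

Lemma Tr_sum (I : finType) (f : I -> F) : Tr t (\sum_i f i) = \sum_i Tr t (f i).
Proof.
rewrite /Tr exchange_big /=; apply: eq_bigr => k _.
apply: (big_morph (fun z : F => z ^+ (2 ^ k))).
  by move=> x y; rewrite frobD.
by rewrite expr0n expn_eq0.
Qed.

Lemma TrD (x y : F) : Tr t (x + y) = Tr t x + Tr t y.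
Proof. by rewrite /Tr -big_split; apply: eq_bigr => k _; rewrite frobD. Qed.

Lemma Tr0 : Tr t (0 : F) = 0.
Proof. by rewrite /Tr big1 // => k _; rewrite expr0n expn_eq0. Qed.

Lemma TrX2 (x : F) : Tr t (x ^+ 2) = Tr t x.
Proof.
have Ht : x ^+ (2 ^ t) = x by rewrite -HF expf_card.
have E : \sum_(k < t.+1) x ^+ (2 ^ k) = x + Tr t (x ^+ 2).
  rewrite big_ord_recl expn0 expr1 /Tr; congr (_ + _).
  by apply: eq_bigr => k _; rewrite -exprM /= expnS.
have E2 : \sum_(k < t.+1) x ^+ (2 ^ k) = Tr t x + x.
  by rewrite big_ord_recr /= Ht.
by apply: (addrI x); rewrite -E E2 addrC.
Qed.

Lemma TrF k (x : F) : Tr t (x ^+ (2 ^ k)) = Tr t x.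
Proof.
elim: k => [|k IH]; first by rewrite expn0 expr1.
by rewrite expnSr exprM TrX2 IH.
Qed.

Lemma Tr01 (x : F) : (Tr t x == 0) || (Tr t x == 1).
Proof.
have H : Tr t x ^+ 2 = Tr t x.
  rewrite -{2}(TrX2 x) /Tr.
  rewrite (big_morph (fun z : F => z ^+ 2) sqrD (_ : 0 ^+ 2 = 0)) ?expr0n //.
  by apply: eq_bigr => k _; rewrite -!exprM mulnC.
have : Tr t x * (Tr t x - 1) == 0 by rewrite mulrBr mulr1 -expr2 H subrr.
by rewrite mulf_eq0 subr_eq0.
Qed.

Lemma trbD (x y : F) : trb t (x + y) = trb t x (+) trb t y.
Proof.
rewrite /trb TrD.
have h1 : (1 : F) != 0 by exact: oner_neq0.
case/orP: (Tr01 x) => /eqP ->; case/orP: (Tr01 y) => /eqP ->;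
  by rewrite ?addr0 ?add0r ?addxx ?eqxx ?h1.
Qed.

Lemma trb0 : trb t (0 : F) = false.
Proof. by rewrite /trb Tr0 eqxx. Qed.

Definition chi (x : F) : algC := sgn (trb t x).

Lemma sgnX a b : sgn (a (+) b) = sgn a * sgn b.
Proof. by case: a; case: b; rewrite /sgn /= ?mulr1 ?mul1r ?mulrNN ?mulr1. Qed.

Lemma sgn_sq b : sgn b * sgn b = 1.
Proof. by case: b; rewrite /sgn /= ?mulr1 ?mulrNN ?mulr1. Qed.

Lemma sgnV b : (sgn b)^-1 = sgn b.
Proof. by case: b; rewrite /sgn /= ?invr1 ?invrN1 ?expr1 ?expr0 ?invr1 ?invrN ?invr1. Qed.

Lemma chiD x y : chi (x + y) = chi x * chi y.
Proof. by rewrite /chi trbD sgnX. Qed.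

Lemma chi0 : chi 0 = 1.
Proof. by rewrite /chi trb0. Qed.

Lemma chi_sq x : chi x * chi x = 1.
Proof. exact: sgn_sq. Qed.

Lemma chi_neq0 x : chi x != 0.
Proof. by apply/negP => /eqP H; have := chi_sq x; rewrite H mul0r => /eqP; rewrite eq_sym oner_eq0. Qed.

Lemma chiF k x : chi (x ^+ (2 ^ k)) = chi x.
Proof. by rewrite /chi /trb TrF. Qed.


Definition ishom (mu : F -> algC) := forall x y, mu (x + y) = mu x * mu y.

Lemma hom_sum0 mu : ishom mu -> forall w, mu w != 1 -> \sum_x mu x = 0.
Proof.
move=> Hmu w Hw.
have E : \sum_x mu x = mu w * \sum_x mu x.
  rewrite mulr_sumr (reindex_inj (addIr w)) /=.
  by apply: eq_bigr => x _; rewrite Hmu mulrC.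
have : (1 - mu w) * \sum_x mu x == 0 by rewrite mulrBl mul1r -E subrr.
by rewrite mulf_eq0 subr_eq0 eq_sym (negbTE Hw) => /eqP.
Qed.

Hypothesis ht : (1 <= t)%N.

Lemma chi_orth (y : F) : \sum_d chi (d * y) = if y == 0 then (#|F|%:R) else 0.
Proof.
case: eqP => [->|/eqP yn0].
  under eq_bigr do rewrite mulr0 chi0.
  by rewrite sumr_const.
pose w := alpha (Ordinal ht) * alpha (Ordinal ht).
have Hw : chi w = -1 by rewrite /chi /trb Halpha eqxx oner_neq0 /sgn expr1.
apply: (@hom_sum0 (fun d => chi (d * y)) _ (w / y)).
  by move=> a b; rewrite mulrDl chiD.
rewrite divfK // Hw.
by rewrite -subr_eq0 -opprD oppr_eq0 (_ : 1 + 1 = 2%:R) // pnatr_eq0.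
Qed.

Lemma cardF_neq0 : (#|F|%:R : algC) != 0.
Proof. by rewrite pnatr_eq0 HF expn_eq0. Qed.

Definition sqhom (lam : F -> algC) := ishom lam /\ forall x, lam x * lam x = 1.

Lemma dual lam : sqhom lam -> exists d, forall y, lam y = chi (d * y).
Proof.
move=> [Hh Hs].
have l0 : lam 0 = 1.
  have := Hs 0; have := Hh 0 0; rewrite addr0 => <-; done.
pose T d := \sum_y lam y * chi (d * y).
have ST : \sum_d T d = #|F|%:R.
  rewrite /T exchange_big /=.
  under eq_bigr do rewrite -mulr_sumr chi_orth.
  rewrite (bigD1 0) //= eqxx l0 mul1r big1 ?addr0 // => y /negbTE ->.
  by rewrite mulr0.
have [d Hd] : exists d, T d != 0.
  apply/existsP; apply: contraT => /existsPn H.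
  move: cardF_neq0; rewrite -ST big1 ?eqxx // => d _.
  by apply/eqP; move: (H d); rewrite negbK.
exists d => y.
have Hm : ishom (fun y => lam y * chi (d * y)).
  by move=> a b; rewrite Hh mulrDr chiD mulrACA.
have Hall : lam y * chi (d * y) = 1.
  apply/eqP; apply: contraT => Hn.
  by move: Hd; rewrite /T (hom_sum0 Hm Hn) eqxx.
by rewrite -[lam y]mulr1 -(chi_sq (d * y)) mulrA Hall mul1r.
Qed.

Lemma sqhomM l1 l2 : sqhom l1 -> sqhom l2 -> sqhom (fun y => l1 y * l2 y).
Proof.
move=> [h1 s1] [h2 s2]; split.
  by move=> a b; rewrite h1 h2 mulrACA.
by move=> x; rewrite mulrACA s1 s2 mulr1.
Qed.

Lemma sqhom_chi c : sqhom (fun y => chi (c * y)).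
Proof. by split => [a b|x]; rewrite ?mulrDr ?chiD ?chi_sq. Qed.


Definition vec (c : {ffun 'I_t -> bool}) : F := \sum_(k < t) (c k)%:R * alpha k.

Lemma TrZb (b : bool) (x : F) : Tr t (b%:R * x) = b%:R * Tr t x.
Proof. by case: b; rewrite ?mul1r ?mul0r ?Tr0. Qed.

Lemma Tr_vec j c : Tr t (alpha j * vec c) = (c j)%:R.
Proof.
rewrite /vec mulr_sumr Tr_sum.
under eq_bigr do rewrite mulrCA TrZb Halpha.
rewrite (bigD1 j) //= eqxx mulr1 big1 ?addr0 // => k /negbTE.
by rewrite eq_sym => ->; rewrite mulr0.
Qed.

Lemma trb_vec j c : trb t (alpha j * vec c) = c j.
Proof. by rewrite /trb Tr_vec; case: (c j); rewrite ?oner_neq0 ?eqxx. Qed.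

Lemma vec_inj : injective vec.
Proof.
move=> c1 c2 E; apply/ffunP => j.
by rewrite -(trb_vec j c1) E trb_vec.
Qed.

Lemma expand (x : F) : x = \sum_(k < t) (trb t (alpha k * x))%:R * alpha k.
Proof.
have : x \in codom vec.
  apply: (inj_card_onto vec_inj).
  by rewrite card_ffun card_bool card_ord HF.
case/codomP => c ->.
by apply: eq_bigr => k _; rewrite trb_vec.
Qed.

Lemma wt1E (x : F) : wt1 alpha x = (\sum_(k < t) trb t (alpha k * x)%R)%N.
Proof.
rewrite /wt1 /coords; case: pickP => [c /eqP Hc | H].
  rewrite -sum1_card big_mkcond /=; apply: eq_bigr => k _.
  by rewrite inE Hc -/(vec c) trb_vec; case: (c k).
have := H [ffun k => trb t (alpha k * x)].
rewrite {1}(expand x) => H1; move: H1.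
rewrite (_ : \sum_(k < t) ([ffun k0 => trb t (alpha k0 * x)] k)%:R * alpha k = \sum_(k < t) (trb t (alpha k * x))%:R * alpha k) ?eqxx //.
by apply: eq_bigr => k _; rewrite ffunE.
Qed.

Definition psi (x : F) : algC := 'i ^+ wt1 alpha x.

Lemma psiE x : psi x = \prod_(k < t) 'i ^+ trb t (alpha k * x).
Proof. by rewrite /psi wt1E expr_sum. Qed.

Lemma iX p q : ('i : algC) ^+ (p (+) q) = 'i ^+ p * 'i ^+ q * sgn (p && q).
Proof.
by case: p; case: q; rewrite /sgn /= ?expr0 ?expr1 ?mulr1 ?mul1r ?mulCii ?mulrN1 ?opprK.
Qed.

Lemma chi_mul (y z : F) : chi (y * z) = \prod_(k < t) sgn (trb t (alpha k * y) && trb t (alpha k * z)).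
Proof.
rewrite {1}(expand y) mulr_suml.
rewrite (big_morph chi chiD chi0); apply: eq_bigr => k _.
by case: (trb t (alpha k * y)); rewrite ?mul1r ?mul0r ?chi0 // /chi.
Qed.

Lemma psiD y z : psi (y + z) = psi y * psi z * chi (y * z).
Proof.
rewrite !psiE chi_mul -!big_split /=; apply: eq_bigr => k _.
by rewrite mulrDr trbD iX.
Qed.

Lemma psi0 : psi 0 = 1.
Proof. by rewrite psiE big1 // => k _; rewrite mulr0 trb0. Qed.

Lemma psi_neq0 x : psi x != 0.
Proof. by rewrite /psi expf_neq0 // neq0Ci. Qed.

Lemma psi_sq y : psi y * psi y = chi (y * y).
Proof.
have := psiD y y; rewrite addxx psi0 => E.
by rewrite -[LHS]mulr1 -(chi_sq (y * y)) mulrA -E mul1r.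
Qed.

Lemma normpsi x : `|psi x| = 1.
Proof. by rewrite /psi normrX normCi expr1n. Qed.

Lemma psi_conj x : psi x * (psi x)^* = 1.
Proof. by rewrite -normCK normpsi expr1n. Qed.


Definition G (c : F) : algC := \sum_x chi (c * x) * psi x.

Lemma G0E : G 0 = \sum_x psi x.
Proof. by apply: eq_bigr => x _; rewrite mul0r chi0 mul1r. Qed.

Lemma G_shift c : psi c * G c = G 0.
Proof.
rewrite G0E /G mulr_sumr [RHS](reindex_inj (addIr c)) /=.
by apply: eq_bigr => x _; rewrite psiD (mulrC x c); ring.
Qed.

Lemma Gc c : G c = (psi c)^-1 * G 0.
Proof. by rewrite -(G_shift c) mulKf // psi_neq0. Qed.

Lemma normG0 : `|G 0| = sqrtC (2%:R ^+ t).
Proof.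
have E : `|G 0| ^+ 2 = 2%:R ^+ t.
  have Hz : forall z, (\sum_x psi x) * (psi z)^* = \sum_x psi x * chi (z * x).
    move=> z; rewrite mulr_suml (reindex_inj (addIr z)) /=.
    apply: eq_bigr => x _; rewrite psiD (mulrC x z).
    transitivity (psi x * chi (z * x) * (psi z * (psi z)^*)); first by ring.
    by rewrite psi_conj mulr1.
  rewrite normCK G0E rmorph_sum mulr_sumr.
  under eq_bigr do rewrite Hz.
  rewrite exchange_big /=.
  under eq_bigr do rewrite -mulr_sumr chi_orth.
  rewrite (bigD1 0) //= eqxx psi0 mul1r big1 ?addr0; last first.
    by move=> y /negbTE ->; rewrite mulr0.
  by rewrite HF natrX.
by rewrite -E sqrCK // normr_ge0.
Qed.

Definition theta i (y : F) : algC := psi y / psi (y ^+ (2 ^ i)).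

Lemma theta_sqhom i : sqhom (theta i).
Proof.
split.
  move=> y z; rewrite /theta frobD !psiD -exprMn chiF.
  have h1 := psi_neq0 (y ^+ (2 ^ i)); have h2 := psi_neq0 (z ^+ (2 ^ i)).
  have h3 := chi_neq0 (y * z).
  rewrite !invfM.
  transitivity (psi y / psi (y ^+ (2 ^ i)) * (psi z / psi (z ^+ (2 ^ i))) * (chi (y * z) / chi (y * z))).
    by ring.
  by rewrite divff ?mulr1.
move=> y; rewrite /theta mulrACA -invfM !psi_sq -exprMn chiF divff //; exact: chi_neq0.
Qed.

Lemma sqhom_chiF i a : sqhom (fun y => chi (y ^+ (2 ^ i) * a)).
Proof. by split => [x y|x]; rewrite ?frobD ?mulrDl ?chiD ?chi_sq. Qed.

Lemma chiE z : sgn (trb t z) = chi z.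
Proof. by []. Qed.

Lemma S_eq i (h : F -> F) a b :
  \sum_(x : F) \sum_(y : F)
     sgn (trb t (x * y ^+ (2 ^ i) + h y) (+) trb t (a * x) (+) trb t (b * y))
       * 'i ^+ (wt2 alpha x y)
  = G 0 * (psi a)^-1 * \sum_y chi (h y) * (theta i y * chi (y ^+ (2 ^ i) * a) * chi (b * y)).
Proof.
rewrite exchange_big /= mulr_sumr; apply: eq_bigr => y _.
transitivity (chi (h y) * chi (b * y) * psi y * G (y ^+ (2 ^ i) + a)).
  rewrite /G mulr_sumr; apply: eq_bigr => x _.
  rewrite trbD !sgnX !chiE /wt2 exprD -/(psi x) -/(psi y) mulrDl chiD (mulrC x (y ^+ _)).
  by ring.
rewrite Gc psiD !invfM /chi sgnV -/(chi _) /theta.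
by ring.
Qed.

Lemma main_lemma i (h : F -> F) :
  negabent alpha (fun x y => trb t (x * y ^+ (2 ^ i) + h y))
  <-> bent t (fun y => trb t (h y)).
Proof.
have W d : \sum_y chi (h y) * chi (d * y) = \sum_y sgn (trb t (h y) (+) trb t (d * y)).
  by apply: eq_bigr => y _; rewrite sgnX.
have Hsq : sqrtC (2%:R ^+ t) * sqrtC (2%:R ^+ t) = (2%:R ^+ t : algC) by rewrite -expr2 sqrtCK.
have Hn : sqrtC (2%:R ^+ t) != 0 :> algC by rewrite sqrtC_eq0 expf_neq0 // pnatr_eq0.
split.
- move=> Hneg mu.
  have [d0 Hd0] := dual (theta_sqhom i).
  have := Hneg 0 (mu - d0); rewrite /= S_eq psi0 invr1 mulr1.
  have -> : \sum_y chi (h y) * (theta i y * chi (y ^+ (2 ^ i) * 0) * chi ((mu - d0) * y))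
      = \sum_y chi (h y) * chi (mu * y).
    apply: eq_bigr => y _; rewrite Hd0 mulr0 chi0 mulr1 -chiD -mulrDl.
    by rewrite addrC subrK.
  rewrite W normrM normG0 => H.
  by apply: (mulfI Hn); rewrite H Hsq.
- move=> Hb a b; rewrite /= S_eq.
  have [d Hd] := dual (sqhomM (sqhomM (theta_sqhom i) (sqhom_chiF i a)) (sqhom_chi b)).
  have -> : \sum_y chi (h y) * (theta i y * chi (y ^+ (2 ^ i) * a) * chi (b * y))
      = \sum_y chi (h y) * chi (d * y).
    by apply: eq_bigr => y _; rewrite Hd.
  rewrite W !normrM normG0 normfV normpsi invr1 mulr1.
  by have := Hb d; rewrite /= => ->.
Qed.

End Main.

Theorem theorem6 (t i : nat) (F : finFieldType) (HF : #|F| = (2 ^ t)%N)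
  (ht : (1 <= t)%N) (alpha : 'I_t -> F) (Halpha : self_dual alpha)
  (h : F -> F) :
  negabent alpha (fun x y => trb t (x * y ^+ (2 ^ i) + h y))
  <-> bent t (fun y => trb t (h y)).
Proof. exact: main_lemma. Qed.
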